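(* There is a universal constant $C>0$ such that for all sufficiently small $\varepsilon>0$ the following holds. Let $P$ be an irreducible, aperiodic transition matrix on a finite set $G$, reversible with respect to the probability measure $\pi$. If $A\subset S\subset G$ satisfy $\pi(A)\le\varepsilon\pi(S)$, then $$h_S(A)=\sum_{x\in A}h_S(x)\le C\,\frac{\varepsilon\log(1/\varepsilon)}{1-\lambda}.$$ In particular this applies to simple random walk on a finite regular graph whenever $|A|\le\varepsilon|S|$.
   Context: $(X_t)$ is the chain with transition matrix $P$. $\lambda=\max_{j>1}|\lambda_j|$, where $1=\lambda_1>\lambda_2\ge\dots\ge\lambda_n>-1$ are the eigenvalues of $P$. For $S\subset G$, $T_S=\inf\{t\ge0:X_t\in S\}$. The harmonic measure on $S$ from $y$ is $h_{y,S}(x)=\Pr_y[X_{T_S}=x]$ and $h_S(x)=\sum_y\pi(y)h_{y,S}(x)$ is the harmonic measure from stationarity. *)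

(* Defs.v *)
From Stdlib Require Import Reals Lra Lia Arith List.
Open Scope R_scope.

Definition rsum (n : nat) (f : nat -> R) : R :=
  fold_right Rplus 0 (map f (seq 0 n)).

Definition stochastic (n : nat) (P : nat -> nat -> R) : Prop :=
  (forall x y, (x < n)%nat -> (y < n)%nat -> 0 <= P x y) /\
  (forall x, (x < n)%nat -> rsum n (fun y => P x y) = 1).

Definition prob_measure (n : nat) (pi : nat -> R) : Prop :=
  (forall x, (x < n)%nat -> 0 <= pi x) /\ rsum n pi = 1.

Fixpoint Ppow (n : nat) (P : nat -> nat -> R) (t : nat) (x y : nat) : R :=
  match t with
  | O => if Nat.eq_dec x y then 1 else 0
  | S t' => rsum n (fun z => P x z * Ppow n P t' z y)
  end.

Definition irreducible (n : nat) (P : nat -> nat -> R) : Prop :=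
  forall x y, (x < n)%nat -> (y < n)%nat -> exists t, 0 < Ppow n P t x y.

Definition aperiodic (n : nat) (P : nat -> nat -> R) : Prop :=
  forall x, (x < n)%nat ->
    forall d : nat,
      (forall t : nat, (0 < t)%nat -> 0 < Ppow n P t x x -> Nat.divide d t) ->
      d = 1%nat.

Definition reversible (n : nat) (P : nat -> nat -> R) (pi : nat -> R) : Prop :=
  forall x y, (x < n)%nat -> (y < n)%nat -> pi x * P x y = pi y * P y x.

(* mu is an eigenvalue of P (for reversible P all eigenvalues are real) *)
Definition eigenvalue (n : nat) (P : nat -> nat -> R) (mu : R) : Prop :=
  exists v : nat -> R,
    (exists i, (i < n)%nat /\ v i <> 0) /\
    (forall i, (i < n)%nat -> rsum n (fun j => P i j * v j) = mu * v i).

(* lam = max_{j>1} |lambda_j|: since 1 is a simple eigenvalue (irreducibility)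
   this is the largest |mu| over eigenvalues mu <> 1 (0 if there is none). *)
Definition slem (n : nat) (P : nat -> nat -> R) (lam : R) : Prop :=
  is_lub (fun r => r = 0 \/ exists mu, eigenvalue n P mu /\ mu <> 1 /\ r = Rabs mu) lam.

(* hit S t y x = Pr_y[T_S <= t and X_{T_S} = x], T_S = inf{t >= 0 : X_t in S} *)
Fixpoint hit (n : nat) (P : nat -> nat -> R) (Sset : nat -> bool) (t : nat) (y x : nat) : R :=
  if Sset y then (if Nat.eq_dec y x then 1 else 0)
  else match t with
       | O => 0
       | S t' => rsum n (fun z => P y z * hit n P Sset t' z x)
       end.

(* harmonic measure h_{y,S}(x) = Pr_y[X_{T_S} = x] = lim_t Pr_y[T_S <= t, X_{T_S} = x] *)
Definition harmonic_from (n : nat) (P : nat -> nat -> R) (Sset : nat -> bool)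
  (h : nat -> nat -> R) : Prop :=
  forall y x, (y < n)%nat -> (x < n)%nat -> Un_cv (fun t => hit n P Sset t y x) (h y x).

Definition harm_stat (n : nat) (pi : nat -> R) (h : nat -> nat -> R) (A : nat -> bool) : R :=
  rsum n (fun x => if A x then rsum n (fun y => pi y * h y x) else 0).

Definition measure (n : nat) (pi : nat -> R) (A : nat -> bool) : R :=
  rsum n (fun x => if A x then pi x else 0).

(* Main.v *)
Require Import Defs.
From Stdlib Require Import Reals Lra Lia List Arith ZArith FunctionalExtensionality Classical.
Open Scope R_scope.

Definition mv (n : nat) (K : nat -> nat -> R) (f : nat -> R) (i : nat) : R :=
  rsum n (fun j => K i j * f j).

Lemma rsum_S n f : rsum (S n) f = rsum n f + f n.
Proof.
  unfold rsum. rewrite seq_S, map_app, fold_right_app. simpl.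
  generalize (f n). intro r.
  induction (map f (seq 0 n)); simpl; [ring| rewrite IHl; ring].
Qed.

Lemma rsum_0 f : rsum 0 f = 0.
Proof. reflexivity. Qed.

Lemma rsum_ext n f g : (forall i, (i < n)%nat -> f i = g i) -> rsum n f = rsum n g.
Proof.
  induction n; intros H; [reflexivity|].
  rewrite !rsum_S, IHn, H; auto.
Qed.

Lemma rsum_plus n f g : rsum n (fun i => f i + g i) = rsum n f + rsum n g.
Proof. induction n; [unfold rsum; simpl; ring|]. rewrite !rsum_S, IHn; ring. Qed.

Lemma rsum_minus n f g : rsum n (fun i => f i - g i) = rsum n f - rsum n g.
Proof. induction n; [unfold rsum; simpl; ring|]. rewrite !rsum_S, IHn; ring. Qed.

Lemma rsum_scal n c f : rsum n (fun i => c * f i) = c * rsum n f.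
Proof. induction n; [unfold rsum; simpl; ring|]. rewrite !rsum_S, IHn; ring. Qed.

Lemma rsum_scal_r n c f : rsum n (fun i => f i * c) = rsum n f * c.
Proof. induction n; [unfold rsum; simpl; ring|]. rewrite !rsum_S, IHn; ring. Qed.

Lemma rsum_zero n : rsum n (fun _ => 0) = 0.
Proof. induction n; [reflexivity|]. rewrite rsum_S, IHn; ring. Qed.

Lemma rsum_le n f g : (forall i, (i < n)%nat -> f i <= g i) -> rsum n f <= rsum n g.
Proof.
  induction n; intros H; [unfold rsum; simpl; lra|].
  rewrite !rsum_S. assert (f n <= g n) by auto.
  assert (rsum n f <= rsum n g) by auto. lra.
Qed.

Lemma rsum_nonneg n f : (forall i, (i < n)%nat -> 0 <= f i) -> 0 <= rsum n f.
Proof.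
  intros H. rewrite <- (rsum_zero n). apply rsum_le. auto.
Qed.

Lemma rsum_swap n m (f : nat -> nat -> R) :
  rsum n (fun x => rsum m (fun y => f x y)) = rsum m (fun y => rsum n (fun x => f x y)).
Proof.
  induction n.
  - unfold rsum at 1; simpl. rewrite rsum_zero. reflexivity.
  - rewrite rsum_S, IHn. rewrite <- rsum_plus. apply rsum_ext. intros; rewrite rsum_S; ring.
Qed.

Lemma rsum_term_le n f i : (forall j, (j < n)%nat -> 0 <= f j) -> (i < n)%nat -> f i <= rsum n f.
Proof.
  induction n; intros H Hi; [lia|].
  rewrite rsum_S.
  assert (0 <= rsum n f) by (apply rsum_nonneg; auto).
  destruct (Nat.eq_dec i n).
  - subst. lra.
  - assert (f i <= rsum n f) by (apply IHn; auto; lia).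
    assert (0 <= f n) by auto. lra.
Qed.

Lemma rsum_zero_terms n f : (forall j, (j < n)%nat -> 0 <= f j) -> rsum n f = 0 ->
  forall i, (i < n)%nat -> f i = 0.
Proof.
  intros H H0 i Hi. pose proof (rsum_term_le n f i H Hi). pose proof (H i Hi). lra.
Qed.

Lemma rsum_pos_exists n f : 0 < rsum n f -> exists i, (i < n)%nat /\ 0 < f i.
Proof.
  induction n; intros H; [unfold rsum in H; simpl in H; lra|].
  rewrite rsum_S in H.
  destruct (Rlt_dec 0 (f n)).
  - exists n; split; auto.
  - destruct IHn as [i [Hi Hf]]; [lra|]. exists i; split; auto.
Qed.

Lemma rsum_delta n x c : (x < n)%nat ->
  rsum n (fun y => if Nat.eq_dec x y then c else 0) = c.
Proof.
  induction n; intros Hx; [lia|].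
  rewrite rsum_S. destruct (Nat.eq_dec x n).
  - subst. rewrite (rsum_ext n _ (fun _ => 0)).
    + rewrite rsum_zero; ring.
    + intros i Hi. destruct (Nat.eq_dec n i); [lia|auto].
  - rewrite IHn by lia. ring.
Qed.

Lemma rsum_delta' n x c : (x < n)%nat ->
  rsum n (fun y => if Nat.eq_dec y x then c else 0) = c.
Proof.
  intros Hx. transitivity (rsum n (fun y => if Nat.eq_dec x y then c else 0)); [|apply rsum_delta; auto].
  apply rsum_ext. intros i _. destruct (Nat.eq_dec i x), (Nat.eq_dec x i); try reflexivity; exfalso; congruence.
Qed.

Lemma rsum_split a b f : rsum (a + b) f = rsum a f + rsum b (fun i => f (a + i)%nat).
Proof.
  induction b.
  - rewrite Nat.add_0_r. rewrite rsum_0. ring.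
  - rewrite Nat.add_succ_r, !rsum_S, IHb. ring.
Qed.

Lemma rsum_mono_len n m f : (n <= m)%nat -> (forall i, 0 <= f i) -> rsum n f <= rsum m f.
Proof.
  intros Hnm H. replace m with (n + (m - n))%nat by lia.
  rewrite rsum_split. assert (0 <= rsum (m - n) (fun i => f (n + i)%nat)).
  { apply rsum_nonneg; auto. } lra.
Qed.

Lemma quad_disc a b c : 0 <= c -> (forall t, 0 <= a + 2 * b * t + c * (t * t)) -> b * b <= a * c.
Proof.
  intros Hc H.
  destruct (Rle_lt_or_eq_dec 0 c Hc) as [Hc'|Hc'].
  - specialize (H (- b / c)).
    replace (a + 2 * b * (- b / c) + c * (- b / c * (- b / c))) with (a - b * b / c) in H
      by (field; lra).
    assert (b * b / c <= a) by lra.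
    apply Rmult_le_compat_r with (r := c) in H0; [|lra].
    replace (b * b / c * c) with (b * b) in H0 by (field; lra). lra.
  - subst c. destruct (Req_dec b 0).
    + subst. assert (0 <= a) by (specialize (H 0); lra). nra.
    + specialize (H (- (Rabs a + 1) / (2 * b))).
      replace (a + 2 * b * (- (Rabs a + 1) / (2 * b)) + 0 * (- (Rabs a + 1) / (2 * b) * (- (Rabs a + 1) / (2 * b))))
        with (a - (Rabs a + 1)) in H by (field; auto).
      pose proof (Rle_abs a). lra.
Qed.

Definition ip (n : nat) (w : nat -> R) (f g : nat -> R) : R := rsum n (fun x => w x * f x * g x).

Lemma ip_sym n w f g : ip n w f g = ip n w g f.
Proof. unfold ip. apply rsum_ext; intros; ring. Qed.

Lemma ip_nonneg n w f : (forall x, (x < n)%nat -> 0 <= w x) -> 0 <= ip n w f f.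
Proof.
  intros H. unfold ip. apply rsum_nonneg. intros i Hi.
  specialize (H i Hi). replace (w i * f i * f i) with (w i * (f i * f i)) by ring.
  apply Rmult_le_pos; nra.
Qed.

Lemma ip_CS n w f g : (forall x, (x < n)%nat -> 0 <= w x) ->
  ip n w f g * ip n w f g <= ip n w f f * ip n w g g.
Proof.
  intros Hw.
  apply quad_disc.
  - apply ip_nonneg; auto.
  - intros t.
    assert (0 <= ip n w (fun x => f x + t * g x) (fun x => f x + t * g x)) by (apply ip_nonneg; auto).
    unfold ip in *.
    replace (rsum n (fun x => w x * f x * f x) + 2 * rsum n (fun x => w x * f x * g x) * t +
      rsum n (fun x => w x * g x * g x) * (t * t)) with
      (rsum n (fun x => w x * (f x + t * g x) * (f x + t * g x))); auto.
    rewrite <- rsum_scal_r, <- rsum_scal, <- rsum_scal_r, <- !rsum_plus.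
    apply rsum_ext; intros; ring.
Qed.

From mathcomp Require all_boot all_algebra Rstruct.

Definition kernel_dich_stmt := forall n K,
  (exists B : nat -> nat -> R, forall f i, lt i n ->
      f i = rsum n (fun j => Rmult (mv n K f j) (B j i))) \/
  (exists f : nat -> R, (exists i, lt i n /\ f i <> R0) /\
      forall j, lt j n -> mv n K f j = R0).

Module Kern.
Import all_boot all_algebra Rstruct.
Import GRing.Theory.
Local Open Scope ring_scope.

Lemma rsum_big n (f : nat -> R) : rsum n f = (\sum_(i < n) f i)%R.
Proof.
  elim: n => [|n IH]. by rewrite big_ord0.
  by rewrite rsum_S big_ord_recr /= IH.
Qed.

Lemma kernel_dich : kernel_dich_stmt.
Proof.
  move=> [|m] K.
  { left; exists (fun _ _ => 0%R) => f i /ltP. by rewrite ltn0. }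
  set n := m.+1.
  set A : 'M[R]_n := \matrix_(i, j) K j i.
  case: (boolP (row_free A)) => hA.
  - left.
    have hU : A \in unitmx by rewrite -row_free_unit.
    set B := invmx A.
    exists (fun j i => B (inord j) (inord i)).
    move=> f i /ltP hi.
    set v : 'rV[R]_n := \row_k f k.
    have hv : v = ((v *m A) *m B)%R by rewrite -mulmxA mulmxV // mulmx1.
    have := congr1 (fun M : 'rV[R]_n => M 0 (Ordinal hi)) hv.
    rewrite /= mxE => ->.
    rewrite mxE rsum_big; apply: eq_bigr => j _.
    rewrite mxE /mv rsum_big; congr (_ * _)%R.
    + apply: eq_bigr => k _; rewrite !mxE; exact: GRing.mulrC.
    + congr (B _ _); apply: val_inj; rewrite /= inordK //.
  - right.
    have hK: kermx A != 0%R by rewrite kermx_eq0.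
    have [i0 [j0 hij]] : exists i j, kermx A i j != 0%R.
      have: [exists i, exists j, kermx A i j != 0%R].
        apply: contraR hK => /existsPn hne. apply/eqP/matrixP => i j.
        move: (hne i) => /existsPn /(_ j) /negPn /eqP. move=> ->; by rewrite mxE.
      by move=> /existsP [i /existsP [j h]]; exists i, j.
    set u : 'rV[R]_n := row i0 (kermx A).
    have hu : (u *m A = 0)%R by rewrite /u -row_mul mulmx_ker row0.
    exists (fun k => u 0 (inord k)). split.
    + exists j0; split; first by apply/ltP.
      rewrite /u mxE. apply/eqP. suff -> : (inord j0 : 'I_n) = j0 by [].
      by apply: val_inj; rewrite /= inordK.
    + move=> j /ltP hj.
      have := congr1 (fun M : 'rV[R]_n => M 0 (Ordinal hj)) hu.
      rewrite /= !mxE. change R0 with (0%R : R). move=> <-.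
      rewrite /mv rsum_big; apply: eq_bigr => k _.
      rewrite [A _ _]mxE GRing.mulrC. congr (_ * _)%R. congr (u _ _); apply: val_inj; rewrite /= inordK //.
Qed.
End Kern.


Definition one : nat -> R := fun _ => 1.

Lemma mv_ext n K f g x : (forall y, (y < n)%nat -> f y = g y) -> mv n K f x = mv n K g x.
Proof. intros H. unfold mv. apply rsum_ext. intros; rewrite H; auto. Qed.

Lemma mv_lin n K f g a b x : mv n K (fun y => a * f y + b * g y) x = a * mv n K f x + b * mv n K g x.
Proof. unfold mv. rewrite <- !rsum_scal, <- rsum_plus. apply rsum_ext; intros; ring. Qed.

Lemma mv_scal n K f a x : mv n K (fun y => a * f y) x = a * mv n K f x.
Proof. unfold mv. rewrite <- !rsum_scal. apply rsum_ext; intros; ring. Qed.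

Lemma mv_plus n K f g x : mv n K (fun y => f y + g y) x = mv n K f x + mv n K g x.
Proof. unfold mv. rewrite <- rsum_plus. apply rsum_ext; intros; ring. Qed.

Lemma mv_minus n K f g x : mv n K (fun y => f y - g y) x = mv n K f x - mv n K g x.
Proof. unfold mv. rewrite <- rsum_minus. apply rsum_ext; intros; ring. Qed.

Lemma mv_const n P c x : stochastic n P -> (x < n)%nat -> mv n P (fun _ => c) x = c.
Proof.
  intros [_ H1] Hx. unfold mv. rewrite rsum_scal_r, H1; auto; ring.
Qed.

Lemma mv_mono n P f g x : stochastic n P -> (x < n)%nat ->
  (forall y, (y < n)%nat -> f y <= g y) -> mv n P f x <= mv n P g x.
Proof.
  intros [H0 _] Hx H. unfold mv. apply rsum_le. intros i Hi.
  apply Rmult_le_compat_l; auto.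
Qed.

Lemma ip_ext n w f g f' g' : (forall x, (x < n)%nat -> f x = f' x) ->
  (forall x, (x < n)%nat -> g x = g' x) -> ip n w f g = ip n w f' g'.
Proof. intros H1 H2. unfold ip. apply rsum_ext. intros; rewrite H1, H2; auto. Qed.

Lemma ip_lin_r n w f g h a b : ip n w f (fun x => a * g x + b * h x) = a * ip n w f g + b * ip n w f h.
Proof. unfold ip. rewrite <- !rsum_scal, <- rsum_plus. apply rsum_ext; intros; ring. Qed.

Lemma ip_lin_l n w f g h a b : ip n w (fun x => a * g x + b * h x) f = a * ip n w g f + b * ip n w h f.
Proof. unfold ip. rewrite <- !rsum_scal, <- rsum_plus. apply rsum_ext; intros; ring. Qed.

Lemma ip_scal_l n w f g a : ip n w (fun x => a * g x) f = a * ip n w g f.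
Proof. unfold ip. rewrite <- !rsum_scal. apply rsum_ext; intros; ring. Qed.

Lemma ip_minus_l n w f g h : ip n w (fun x => g x - h x) f = ip n w g f - ip n w h f.
Proof. unfold ip. rewrite <- rsum_minus. apply rsum_ext; intros; ring. Qed.

Lemma ip_plus_l n w f g h : ip n w (fun x => g x + h x) f = ip n w g f + ip n w h f.
Proof. unfold ip. rewrite <- rsum_plus. apply rsum_ext; intros; ring. Qed.

Lemma ip_const_l n w f c : ip n w (fun _ => c) f = c * ip n w one f.
Proof. unfold ip, one. rewrite <- rsum_scal. apply rsum_ext; intros; ring. Qed.

Lemma ip_one_one n pi : prob_measure n pi -> ip n pi one one = 1.
Proof. intros [_ H]. unfold ip, one. transitivity (rsum n pi); auto. apply rsum_ext; intros; ring. Qed.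

Section M.
Variables (n : nat) (P : nat -> nat -> R) (pi : nat -> R).
Hypothesis Hs : stochastic n P.
Hypothesis Hpi : prob_measure n pi.
Hypothesis Hrev : reversible n P pi.

Lemma stat y : (y < n)%nat -> rsum n (fun x => pi x * P x y) = pi y.
Proof.
  intros Hy. transitivity (rsum n (fun x => pi y * P y x)).
  - apply rsum_ext; intros; apply Hrev; auto.
  - rewrite rsum_scal. destruct Hs as [_ H1]. rewrite H1; auto; ring.
Qed.

Lemma selfadj f g : ip n pi (mv n P f) g = ip n pi f (mv n P g).
Proof.
  unfold ip, mv.
  transitivity (rsum n (fun x => rsum n (fun y => pi x * P x y * f y * g x))).
  - apply rsum_ext; intros. rewrite <- rsum_scal, <- rsum_scal_r. apply rsum_ext; intros; ring.
  - rewrite rsum_swap. apply rsum_ext; intros y Hy.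
    rewrite <- rsum_scal. apply rsum_ext; intros x Hx.
    rewrite (Hrev x y) by auto. ring.
Qed.

Lemma ipP1 f : ip n pi (mv n P f) one = ip n pi f one.
Proof.
  rewrite selfadj. apply ip_ext; auto. intros; unfold one. apply mv_const; auto.
Qed.

Lemma jensen_row f x : (x < n)%nat -> mv n P f x * mv n P f x <= mv n P (fun y => f y * f y) x.
Proof.
  intros Hx.
  pose proof (ip_CS n (P x) f one) as H.
  destruct Hs as [H0 H1].
  assert (E1 : ip n (P x) f one = mv n P f x) by (unfold ip, mv, one; apply rsum_ext; intros; ring).
  assert (E2 : ip n (P x) one one = 1) by (unfold ip, one; transitivity (rsum n (fun y => P x y)); [apply rsum_ext; intros; ring|auto]).
  assert (E3 : ip n (P x) f f = mv n P (fun y => f y * f y) x) by (unfold ip, mv; apply rsum_ext; intros; ring).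
  rewrite E1, E2, E3, Rmult_1_r in H. apply H. intros; apply H0; auto.
Qed.

Lemma contraction f : ip n pi (mv n P f) (mv n P f) <= ip n pi f f.
Proof.
  destruct Hpi as [Hp _].
  apply Rle_trans with (ip n pi one (mv n P (fun y => f y * f y))).
  - unfold ip, one. apply rsum_le. intros i Hi.
    pose proof (jensen_row f i Hi). pose proof (Hp i Hi).
    replace (pi i * 1 * mv n P (fun y => f y * f y) i) with (pi i * mv n P (fun y => f y * f y) i) by ring.
    rewrite Rmult_assoc. apply Rmult_le_compat_l; auto.
  - rewrite ip_sym, ipP1. right. unfold ip, one. apply rsum_ext; intros; ring.
Qed.

Lemma Ppow_nonneg t x y : (x < n)%nat -> (y < n)%nat -> 0 <= Ppow n P t x y.
Proof.
  revert x. induction t; intros x Hx Hy; simpl.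
  - destruct (Nat.eq_dec x y); lra.
  - apply rsum_nonneg. intros z Hz. destruct Hs as [H0 _].
    apply Rmult_le_pos; auto.
Qed.

Lemma Ppow_stat t y : (y < n)%nat -> rsum n (fun x => pi x * Ppow n P t x y) = pi y.
Proof.
  revert y. induction t; intros y Hy; simpl.
  - transitivity (rsum n (fun x => if Nat.eq_dec x y then pi y else 0)).
    + apply rsum_ext; intros x Hx. destruct (Nat.eq_dec x y); subst; ring.
    + apply rsum_delta'; auto.
  - transitivity (rsum n (fun x => rsum n (fun z => pi x * P x z * Ppow n P t z y))).
    + apply rsum_ext; intros. rewrite <- rsum_scal. apply rsum_ext; intros; ring.
    + rewrite rsum_swap. rewrite <- (IHt y Hy). apply rsum_ext; intros z Hz.
      rewrite rsum_scal_r, stat; auto.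
Qed.

Lemma pi_pos : irreducible n P -> forall y, (y < n)%nat -> 0 < pi y.
Proof.
  intros Hirr y Hy.
  destruct Hpi as [Hp H1].
  destruct (rsum_pos_exists n pi) as [z [Hz Hpz]]; [lra|].
  destruct (Hirr z y Hz Hy) as [t Ht].
  rewrite <- (Ppow_stat t y Hy).
  apply Rlt_le_trans with (pi z * Ppow n P t z y); [apply Rmult_lt_0_compat; auto|].
  apply (rsum_term_le n (fun x => pi x * Ppow n P t x y) z); auto.
  intros j Hj. apply Rmult_le_pos; auto. apply Ppow_nonneg; auto.
Qed.

End M.


Lemma argmax n (g : nat -> R) : (1 <= n)%nat -> exists x, (x < n)%nat /\ forall y, (y < n)%nat -> g y <= g x.
Proof.
  induction n; intros Hn; [lia|].
  destruct (Nat.eq_dec n 0).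
  - subst. exists 0%nat. split; [lia|]. intros y Hy. assert (y = 0%nat) by lia. subst; lra.
  - destruct IHn as [x [Hx H]]; [lia|].
    destruct (Rle_dec (g n) (g x)).
    + exists x; split; [lia|]. intros y Hy. destruct (Nat.eq_dec y n); [subst; auto|]. apply H; lia.
    + exists n; split; [lia|]. intros y Hy. destruct (Nat.eq_dec y n); [subst; lra|].
      specialize (H y ltac:(lia)). lra.
Qed.

Section MP.
Variables (n : nat) (P : nat -> nat -> R).
Hypothesis Hs : stochastic n P.

Lemma mp_step (c : R) (phi : nat -> R) (M2 : R) x z :
  c * c = 1 -> (forall y, (y < n)%nat -> mv n P phi y = c * phi y) ->
  (forall y, (y < n)%nat -> phi y * phi y <= M2) ->
  (x < n)%nat -> phi x * phi x = M2 -> (z < n)%nat -> 0 < P x z -> phi z = c * phi x.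
Proof.
  intros Hc Heig Hmax Hx HM Hz HP.
  destruct Hs as [H0 H1].
  assert (Hsum : rsum n (fun y => P x y * (M2 - c * phi x * phi y)) = 0).
  { transitivity (M2 * rsum n (fun y => P x y) - c * phi x * mv n P phi x).
    - unfold mv. rewrite <- !rsum_scal, <- rsum_minus. apply rsum_ext; intros; ring.
    - rewrite H1, Heig by auto. replace (c * phi x * (c * phi x)) with ((c * c) * (phi x * phi x)) by ring.
      rewrite Hc, HM. ring. }
  assert (Hnn : forall y, (y < n)%nat -> 0 <= P x y * (M2 - c * phi x * phi y)).
  { intros y Hy. apply Rmult_le_pos; auto.
    pose proof (Hmax y Hy). assert (0 <= (c * phi x - phi y) * (c * phi x - phi y)) by (apply Rle_0_sqr).
    assert ((c * phi x) * (c * phi x) = M2) by (replace ((c * phi x) * (c * phi x)) with ((c*c) * (phi x * phi x)) by ring; rewrite Hc, HM; ring).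
    assert (E : (c * phi x - phi y) * (c * phi x - phi y) = (c * phi x) * (c * phi x) - 2 * (c * phi x * phi y) + phi y * phi y) by ring.
    lra. }
  pose proof (rsum_zero_terms n _ Hnn Hsum z Hz) as Hz0.
  assert (Hm : M2 - c * phi x * phi z = 0).
  { apply Rmult_integral in Hz0. destruct Hz0; [lra|auto]. }
  pose proof (Hmax z Hz).
  assert ((c * phi x) * (c * phi x) = M2) by (replace ((c * phi x) * (c * phi x)) with ((c*c) * (phi x * phi x)) by ring; rewrite Hc, HM; ring).
  assert (E : (phi z - c * phi x) * (phi z - c * phi x) = phi z * phi z - 2 * (c * phi x * phi z) + (c * phi x) * (c * phi x)) by ring.
  assert ((phi z - c * phi x) * (phi z - c * phi x) <= 0) by lra.
  assert (0 <= (phi z - c * phi x) * (phi z - c * phi x)) by (apply Rle_0_sqr).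
  nra.
Qed.

Lemma mp_pow (c : R) (phi : nat -> R) (M2 : R) :
  c * c = 1 -> (forall y, (y < n)%nat -> mv n P phi y = c * phi y) ->
  (forall y, (y < n)%nat -> phi y * phi y <= M2) ->
  forall t x y, (x < n)%nat -> phi x * phi x = M2 -> 0 < Ppow n P t x y ->
     phi y = c ^ t * phi x /\ phi y * phi y = M2.
Proof.
  intros Hc Heig Hmax t. induction t; intros x y Hx HM Hpos; simpl in Hpos.
  - destruct (Nat.eq_dec x y); [subst; simpl; split; [ring|auto]|lra].
  - destruct (rsum_pos_exists n _ Hpos) as [z [Hz Hzp]].
    destruct Hs as [H0 _].
    assert (HPxz : 0 < P x z).
    { destruct (Rle_lt_or_eq_dec 0 (P x z) (H0 x z Hx Hz)); auto. rewrite <- e in Hzp. lra. }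
    assert (Hpt : 0 < Ppow n P t z y).
    { destruct (Rle_lt_dec (Ppow n P t z y) 0); auto.
      assert (P x z * Ppow n P t z y <= 0) by nra; lra. }
    assert (Hz' : phi z = c * phi x) by (apply (mp_step c phi M2 x z); auto).
    assert (HMz : phi z * phi z = M2).
    { rewrite Hz'. replace (c * phi x * (c * phi x)) with ((c*c) * (phi x * phi x)) by ring. rewrite Hc, HM; ring. }
    destruct (IHt z y Hz HMz Hpt) as [E1 E2]. split; auto.
    rewrite E1, Hz'. simpl. ring.
Qed.

Lemma eig1_const phi : irreducible n P -> (1 <= n)%nat ->
  (forall y, (y < n)%nat -> mv n P phi y = phi y) ->
  exists c, forall y, (y < n)%nat -> phi y = c.
Proof.
  intros Hirr Hn Heig.
  destruct (argmax n (fun y => phi y * phi y) Hn) as [x0 [Hx0 Hmax]].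
  exists (phi x0). intros y Hy.
  destruct (Hirr x0 y Hx0 Hy) as [t Ht].
  destruct (mp_pow 1 phi (phi x0 * phi x0) ltac:(ring)) with (t := t) (x := x0) (y := y) as [E _]; auto.
  - intros; rewrite Heig; auto; ring.
  - rewrite E, pow1. ring.
Qed.

Lemma no_eig_m1 phi : aperiodic n P -> (1 <= n)%nat ->
  (forall y, (y < n)%nat -> mv n P phi y = - phi y) ->
  (exists i, (i < n)%nat /\ phi i <> 0) -> False.
Proof.
  intros Hap Hn Heig [i [Hi Hne]].
  destruct (argmax n (fun y => phi y * phi y) Hn) as [x0 [Hx0 Hmax]].
  assert (Hx0ne : phi x0 <> 0).
  { intro E. pose proof (Hmax i Hi). simpl in H. rewrite E in H.
    assert (0 <= phi i * phi i) by (apply Rle_0_sqr).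
    assert (phi i * phi i = 0) by lra. apply Hne. apply Rmult_integral in H1. tauto. }
  assert (2 = 1)%nat; [|lia].
  apply (Hap x0 Hx0 2%nat). intros t Ht Hpos.
  destruct (mp_pow (-1) phi (phi x0 * phi x0) ltac:(ring)) with (t := t) (x := x0) (y := x0) as [E _]; auto.
  - intros; rewrite Heig; auto; ring.
  - destruct (Nat.Even_or_Odd t) as [[k Hk]|[k Hk]].
    + exists k. lia.
    + exfalso. subst t. replace (2 * k + 1)%nat with (S (2 * k)) in E by lia.
      rewrite pow_1_odd in E. apply Hx0ne. lra.
Qed.
End MP.


Section Spec.
Variables (n : nat) (P : nat -> nat -> R) (pi : nat -> R).
Hypothesis Hs : stochastic n P.
Hypothesis Hpi : prob_measure n pi.
Hypothesis Hrev : reversible n P pi.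
Hypothesis Hpos : forall x, (x < n)%nat -> 0 < pi x.

Lemma Hpi_nn : forall x, (x < n)%nat -> 0 <= pi x.
Proof. intros; apply Rlt_le; auto. Qed.

Definition PiM (x y : nat) : R := (if Nat.eq_dec x y then 1 else 0) - pi y.
Definition Pi (f : nat -> R) : nat -> R := mv n PiM f.
Definition Q (f : nat -> R) : nat -> R := mv n P (Pi f).

Lemma Pi_val f x : (x < n)%nat -> Pi f x = f x - ip n pi f one.
Proof.
  intros Hx. unfold Pi, mv, PiM, ip, one.
  transitivity (rsum n (fun y => if Nat.eq_dec x y then f x else 0) - rsum n (fun y => pi y * f y * 1)).
  - rewrite <- rsum_minus. apply rsum_ext. intros y Hy. destruct (Nat.eq_dec x y); subst; ring.
  - rewrite rsum_delta; auto.
Qed.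

Lemma ip_Pi_one f : ip n pi (Pi f) one = 0.
Proof.
  rewrite (ip_ext n pi (Pi f) one (fun x => 1 * f x + (- ip n pi f one) * one x) one).
  - rewrite ip_lin_l, ip_one_one; auto. ring.
  - intros; rewrite Pi_val; auto; unfold one; ring.
  - auto.
Qed.

Lemma ip_Pi_l f g : ip n pi (Pi f) g = ip n pi f g - ip n pi f one * ip n pi g one.
Proof.
  rewrite (ip_ext n pi (Pi f) g (fun x => 1 * f x + (- ip n pi f one) * one x) g).
  - rewrite ip_lin_l. rewrite (ip_sym n pi one g). ring.
  - intros; rewrite Pi_val; auto; unfold one; ring.
  - auto.
Qed.

Lemma Pi_selfadj f g : ip n pi (Pi f) g = ip n pi f (Pi g).
Proof.
  rewrite ip_Pi_l, (ip_sym n pi f (Pi g)), ip_Pi_l, (ip_sym n pi g f). ring.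
Qed.

Lemma ip_Pi_Pi f : ip n pi (Pi f) (Pi f) = ip n pi f f - ip n pi f one * ip n pi f one.
Proof.
  rewrite Pi_selfadj. rewrite (ip_sym n pi f (Pi (Pi f))).
  rewrite ip_Pi_l, ip_Pi_one, ip_Pi_l. ring.
Qed.

Lemma Pi_lin f g a b : Pi (fun x => a * f x + b * g x) = fun x => a * Pi f x + b * Pi g x.
Proof. apply functional_extensionality; intros; unfold Pi; apply mv_lin. Qed.

Lemma Q_lin f g a b : Q (fun x => a * f x + b * g x) = fun x => a * Q f x + b * Q g x.
Proof. apply functional_extensionality; intros; unfold Q; rewrite Pi_lin; apply mv_lin. Qed.

Lemma ip_nn f : 0 <= ip n pi f f.
Proof. apply ip_nonneg. apply Hpi_nn. Qed.

Lemma Q_le f : ip n pi (Q f) (Q f) <= ip n pi f f.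
Proof.
  unfold Q. eapply Rle_trans; [apply contraction; auto|].
  rewrite ip_Pi_Pi. pose proof (Rle_0_sqr (ip n pi f one)). unfold Rsqr in H. lra.
Qed.

Definition Eset (r : R) : Prop := exists f, ip n pi f f = 1 /\ r = ip n pi (Q f) (Q f).

Lemma Eset_bound : bound Eset.
Proof. exists 1. intros r [f [H1 ->]]. rewrite <- H1. apply Q_le. Qed.

Lemma Eset_ne : exists r, Eset r.
Proof. exists (ip n pi (Q one) (Q one)). exists one. split; auto. apply ip_one_one; auto. Qed.

Definition m : R := proj1_sig (completeness Eset Eset_bound Eset_ne).

Lemma m_lub : is_lub Eset m.
Proof. unfold m. destruct (completeness Eset Eset_bound Eset_ne); auto. Qed.

Lemma m_le1 : m <= 1.
Proof. destruct m_lub as [_ H]. apply H. intros r [f [H1 ->]]. rewrite <- H1. apply Q_le. Qed.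

Lemma m_ge0 : 0 <= m.
Proof.
  destruct m_lub as [H _]. apply Rle_trans with (ip n pi (Q one) (Q one)).
  - apply ip_nn.
  - apply H. exists one. split; auto. apply ip_one_one; auto.
Qed.

Lemma ip_zero_fun f : ip n pi f f = 0 -> forall x, (x < n)%nat -> f x = 0.
Proof.
  intros H x Hx.
  assert (Hnn : forall j, (j < n)%nat -> 0 <= pi j * f j * f j).
  { intros j Hj. rewrite Rmult_assoc. apply Rmult_le_pos; [apply Hpi_nn; auto|apply Rle_0_sqr]. }
  pose proof (rsum_zero_terms n _ Hnn H x Hx) as H0. simpl in H0.
  rewrite Rmult_assoc in H0. apply Rmult_integral in H0. destruct H0.
  - pose proof (Hpos x Hx). lra.
  - apply Rmult_integral in H0; tauto.
Qed.

Lemma Qbound f : ip n pi (Q f) (Q f) <= m * ip n pi f f.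
Proof.
  destruct (Rle_lt_or_eq_dec 0 (ip n pi f f) (ip_nn f)) as [Hp|Hz].
  - set (s := ip n pi f f) in *.
    set (g := fun x => (/ sqrt s) * f x + 0 * f x).
    assert (Hsq : 0 < sqrt s) by (apply sqrt_lt_R0; auto).
    assert (Hg : ip n pi g g = 1).
    { unfold g. rewrite ip_lin_l, !ip_lin_r.
      replace (/ sqrt s * (/ sqrt s * ip n pi f f + 0 * ip n pi f f) + 0 * (/ sqrt s * ip n pi f f + 0 * ip n pi f f))
        with (ip n pi f f / (sqrt s * sqrt s)) by (field; lra).
      rewrite sqrt_sqrt by lra. fold s. field. lra. }
    assert (HQ : ip n pi (Q g) (Q g) <= m).
    { destruct m_lub as [H _]. apply H. exists g; split; auto. }
    unfold g in HQ. rewrite Q_lin in HQ. rewrite ip_lin_l, !ip_lin_r in HQ.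
    replace (/ sqrt s * (/ sqrt s * ip n pi (Q f) (Q f) + 0 * ip n pi (Q f) (Q f)) +
        0 * (/ sqrt s * ip n pi (Q f) (Q f) + 0 * ip n pi (Q f) (Q f)))
      with (ip n pi (Q f) (Q f) / (sqrt s * sqrt s)) in HQ by (field; lra).
    rewrite sqrt_sqrt in HQ by lra.
    apply Rmult_le_compat_r with (r := s) in HQ; [|lra].
    replace (ip n pi (Q f) (Q f) / s * s) with (ip n pi (Q f) (Q f)) in HQ by (field; lra).
    rewrite Rmult_comm in HQ. lra.
  - assert (H0 : forall x, (x < n)%nat -> f x = 0) by (apply ip_zero_fun; auto).
    assert (HQ0 : forall x, Q f x = 0).
    { intros x. unfold Q. rewrite (mv_ext n P (Pi f) (fun y => 0 * one y)).
      - rewrite mv_scal. ring.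
      - intros y Hy. rewrite Pi_val; auto. rewrite H0; auto.
        unfold ip. rewrite (rsum_ext n _ (fun _ => 0)). rewrite rsum_zero. ring.
        intros; rewrite H0; auto; ring. }
    unfold ip at 1. rewrite (rsum_ext n _ (fun _ => 0)). rewrite rsum_zero, <- Hz. lra.
    intros; rewrite HQ0; ring.
Qed.

Lemma near d : 0 < d -> exists f, ip n pi f f = 1 /\ m - d <= ip n pi (Q f) (Q f).
Proof.
  intros Hd. apply NNPP. intros Hn.
  destruct m_lub as [_ H].
  assert (m <= m - d); [|lra].
  apply H. intros r [f [H1 ->]].
  destruct (Rle_dec (ip n pi (Q f) (Q f)) (m - d)); auto.
  exfalso. apply Hn. exists f. split; auto. lra.
Qed.


Lemma eig_bound mu : eigenvalue n P mu -> mu <> 1 -> mu * mu <= m.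
Proof.
  intros [v [[i [Hi Hvi]] Hv]] Hmu.
  assert (H1 : ip n pi v one = 0).
  { pose proof (ipP1 n P pi Hs Hrev v) as E.
    rewrite (ip_ext n pi (mv n P v) one (fun x => mu * v x + 0 * v x) one) in E.
    - rewrite ip_lin_l in E. apply Rmult_eq_reg_l with (r := mu - 1); [|lra]. lra.
    - intros; unfold mv; rewrite Hv; auto; ring.
    - auto. }
  assert (HQ : forall x, Q v x = mv n P v x).
  { intros x. unfold Q. apply mv_ext. intros; rewrite Pi_val, H1; auto; ring. }
  pose proof (Qbound v) as HB.
  rewrite (ip_ext n pi (Q v) (Q v) (fun x => mu * v x + 0 * v x) (fun x => mu * v x + 0 * v x)) in HB;
   [| intros; rewrite HQ; unfold mv; rewrite Hv; auto; ring | intros; rewrite HQ; unfold mv; rewrite Hv; auto; ring].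
  rewrite ip_lin_l, !ip_lin_r in HB.
  assert (Hpos' : 0 < ip n pi v v).
  { unfold ip. apply Rlt_le_trans with (pi i * v i * v i).
    - rewrite Rmult_assoc. apply Rmult_lt_0_compat; auto.
      destruct (Rlt_dec 0 (v i)); [nra|]. assert (v i < 0) by lra. nra.
    - apply (rsum_term_le n (fun x => pi x * v x * v x) i); auto.
      intros j Hj. rewrite Rmult_assoc. apply Rmult_le_pos; [apply Hpi_nn; auto|apply Rle_0_sqr]. }
  apply Rmult_le_reg_r with (r := ip n pi v v); auto. lra.
Qed.

Definition ev (y : nat) : nat -> R := fun z => if Nat.eq_dec z y then 1 else 0.

Lemma lin_matrix (L : (nat -> R) -> (nat -> R)) :
  (forall f g a b, L (fun x => a * f x + b * g x) = fun x => a * L f x + b * L g x) ->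
  (forall f g x, (x < n)%nat -> (forall y, (y < n)%nat -> f y = g y) -> L f x = L g x) ->
  forall f x, (x < n)%nat -> L f x = mv n (fun x y => L (ev y) x) f x.
Proof.
  intros Hlin Hloc f x Hx.
  set (F := fun k z => rsum k (fun y => f y * ev y z)).
  assert (HF : forall k x, L (F k) x = rsum k (fun y => L (ev y) x * f y)).
  { induction k; intros x'.
    - replace (F 0%nat) with (fun z : nat => 0 * f z + 0 * f z).
      + rewrite Hlin. rewrite rsum_0. ring.
      + apply functional_extensionality; intros; unfold F; rewrite rsum_0; ring.
    - replace (F (S k)) with (fun z => 1 * F k z + f k * ev k z).
      + rewrite Hlin, rsum_S, IHk. ring.
      + apply functional_extensionality; intros; unfold F; rewrite rsum_S; ring. }
  rewrite (Hloc f (F n) x Hx).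
  - rewrite HF. unfold mv. apply rsum_ext; intros; ring.
  - intros y Hy. unfold F, ev. symmetry.
    transitivity (rsum n (fun z => if Nat.eq_dec z y then f y else 0)).
    + apply rsum_ext; intros z Hz. destruct (Nat.eq_dec y z), (Nat.eq_dec z y); subst; try ring; congruence.
    + apply rsum_delta'; auto.
Qed.

Definition Cop (f : nat -> R) : nat -> R := fun x => m * f x + (-1) * Pi (mv n P (Q f)) x.

Lemma Cop_lin f g a b : Cop (fun x => a * f x + b * g x) = fun x => a * Cop f x + b * Cop g x.
Proof.
  apply functional_extensionality; intros x. unfold Cop. rewrite Q_lin.
  replace (mv n P (fun x0 => a * Q f x0 + b * Q g x0)) with (fun x0 => a * mv n P (Q f) x0 + b * mv n P (Q g) x0).
  - rewrite Pi_lin. ring.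
  - apply functional_extensionality; intros; rewrite mv_lin; auto.
Qed.

Lemma Pi_loc f g x : (forall y, (y < n)%nat -> f y = g y) -> Pi f x = Pi g x.
Proof. intros H. unfold Pi. apply mv_ext; auto. Qed.

Lemma Cop_loc f g x : (x < n)%nat -> (forall y, (y < n)%nat -> f y = g y) -> Cop f x = Cop g x.
Proof.
  intros Hx H. unfold Cop. rewrite H by auto. f_equal. f_equal.
  apply Pi_loc. intros. unfold Q. apply mv_ext. intros. apply mv_ext. intros. apply Pi_loc; auto.
Qed.

Definition Kc (x y : nat) : R := Cop (ev y) x.

Lemma Kc_mv f x : (x < n)%nat -> mv n Kc f x = Cop f x.
Proof.
  intros Hx. symmetry. apply (lin_matrix Cop Cop_lin Cop_loc f x Hx).
Qed.

Definition bf (f g : nat -> R) : R := m * ip n pi f g - ip n pi (Q f) (Q g).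

Lemma bf_nn f : 0 <= bf f f.
Proof. unfold bf. pose proof (Qbound f). lra. Qed.

Lemma bf_CS f g : bf f g * bf f g <= bf f f * bf g g.
Proof.
  apply quad_disc.
  - apply bf_nn.
  - intros t. pose proof (bf_nn (fun x => 1 * f x + t * g x)) as H.
    unfold bf in *. rewrite Q_lin in H.
    repeat rewrite ip_lin_l in H; repeat rewrite ip_lin_r in H.
    rewrite (ip_sym n pi g f), (ip_sym n pi (Q g) (Q f)) in H. nra.
Qed.

Lemma ip_Cop g f : ip n pi g (Cop f) = bf g f.
Proof.
  unfold Cop, bf. rewrite ip_lin_r.
  rewrite <- Pi_selfadj, <- (selfadj n P pi Hrev); auto.
  unfold Q. ring.
Qed.


Lemma Cop_bound f : ip n pi (Cop f) (Cop f) <= m * bf f f.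
Proof.
  set (X := ip n pi (Cop f) (Cop f)).
  assert (HX : X = bf (Cop f) f) by (unfold X; apply ip_Cop).
  pose proof (bf_CS (Cop f) f) as HCS.
  assert (Hb : bf (Cop f) (Cop f) <= m * X).
  { unfold bf, X. pose proof (ip_nn (Q (Cop f))). lra. }
  pose proof (bf_nn f). pose proof m_ge0. assert (0 <= X) by (apply ip_nn).
  rewrite <- HX in HCS.
  destruct (Rle_lt_or_eq_dec 0 X H1) as [HXp|HX0]; [|rewrite <- HX0; nra].
  assert (X * X <= (m * bf f f) * X) by nra.
  apply Rmult_le_reg_r with (r := X); auto.
Qed.

Hypothesis Hirr : irreducible n P.
Hypothesis Hap : aperiodic n P.
Hypothesis Hn : (1 <= n)%nat.

Lemma eig_exists : 0 < m -> exists mu, eigenvalue n P mu /\ mu <> 1 /\ mu * mu = m.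
Proof.
  intros Hm.
  destruct (Kern.kernel_dich n Kc) as [[B HB] | [v [[i [Hi Hvi]] Hv]]].
  - exfalso.
    set (beta := rsum n (fun i => rsum n (fun j => B j i * B j i))).
    set (c0 := rsum n (fun j => / pi j)).
    assert (Hbeta : 0 <= beta).
    { apply rsum_nonneg; intros; apply rsum_nonneg; intros; apply Rle_0_sqr. }
    assert (Hc0 : 0 <= c0).
    { apply rsum_nonneg; intros; apply Rlt_le, Rinv_0_lt_compat; auto. }
    assert (H3 : 0 <= c0 * m * beta) by (repeat apply Rmult_le_pos; lra).
    set (d := / (c0 * m * beta + 1)).
    assert (Hd : 0 < d) by (apply Rinv_0_lt_compat; lra).
    destruct (near d Hd) as [f [Hf1 Hf2]].
    assert (Hb : bf f f <= d) by (unfold bf; rewrite Hf1; lra).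
    pose proof (Cop_bound f) as HC.
    set (Z := rsum n (fun j => Cop f j * Cop f j)).
    assert (HZ : Z <= c0 * ip n pi (Cop f) (Cop f)).
    { unfold Z, c0. rewrite <- rsum_scal_r. apply rsum_le. intros j Hj.
      assert (pi j * Cop f j * Cop f j <= ip n pi (Cop f) (Cop f)).
      { apply (rsum_term_le n (fun x => pi x * Cop f x * Cop f x) j); auto.
        intros k Hk. rewrite Rmult_assoc. apply Rmult_le_pos; [apply Hpi_nn; auto|apply Rle_0_sqr]. }
      pose proof (Hpos j Hj).
      replace (Cop f j * Cop f j) with (/ pi j * (pi j * Cop f j * Cop f j)) by (field; lra).
      apply Rmult_le_compat_l; auto. apply Rlt_le, Rinv_0_lt_compat; auto. }
    assert (Hfi : forall i, (i < n)%nat -> f i * f i <= Z * rsum n (fun j => B j i * B j i)).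
    { intros i Hi. rewrite (HB f i Hi).
      pose proof (ip_CS n (fun _ => 1) (mv n Kc f) (fun j => B j i)) as H.
      assert (E1 : ip n (fun _ => 1) (mv n Kc f) (fun j => B j i) = rsum n (fun j => mv n Kc f j * B j i))
        by (unfold ip; apply rsum_ext; intros; ring).
      assert (E2 : ip n (fun _ => 1) (mv n Kc f) (mv n Kc f) = Z)
        by (unfold ip, Z; apply rsum_ext; intros; rewrite Kc_mv; auto; ring).
      assert (E3 : ip n (fun _ => 1) (fun j => B j i) (fun j => B j i) = rsum n (fun j => B j i * B j i))
        by (unfold ip; apply rsum_ext; intros; ring).
      rewrite E1, E2, E3 in H. apply H. intros; lra. }
    assert (H1 : 1 <= Z * beta).
    { rewrite <- Hf1. unfold ip, beta. rewrite <- rsum_scal. apply rsum_le. intros i Hi.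
      apply Rle_trans with (f i * f i); [|apply Hfi; auto].
      assert (pi i <= 1).
      { destruct Hpi as [_ Hsum]. rewrite <- Hsum.
        apply (rsum_term_le n pi i); auto. apply Hpi_nn. }
      rewrite Rmult_assoc. pose proof (Rle_0_sqr (f i)). unfold Rsqr in H0.
      pose proof (Hpos i Hi). nra. }
    assert (HZ2 : Z <= c0 * (m * d)).
    { apply Rle_trans with (c0 * ip n pi (Cop f) (Cop f)); auto.
      apply Rmult_le_compat_l; auto. apply Rle_trans with (m * bf f f); auto.
      apply Rmult_le_compat_l; lra. }
    assert (Z * beta <= c0 * m * beta * d) by nra.
    assert (c0 * m * beta * d < 1).
    { unfold d. apply Rmult_lt_reg_r with (r := c0 * m * beta + 1); [lra|].
      rewrite Rmult_assoc, Rinv_l by lra. lra. }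
    lra.
  -
    assert (HC : forall j, (j < n)%nat -> m * v j = Pi (mv n P (Q v)) j).
    { intros j Hj. pose proof (Hv j Hj) as E. rewrite Kc_mv in E by auto. unfold Cop in E. lra. }
    assert (Hv1 : ip n pi v one = 0).
    { assert (E : ip n pi (fun x => m * v x + 0 * v x) one = ip n pi (Pi (mv n P (Q v))) one).
      { apply ip_ext; auto. intros; rewrite <- HC; auto; ring. }
      rewrite ip_lin_l, ip_Pi_one in E. apply Rmult_eq_reg_l with (r := m); lra. }
    assert (HQv : Q v = mv n P v).
    { apply functional_extensionality; intros x. unfold Q. apply mv_ext. intros; rewrite Pi_val, Hv1; auto; ring. }
    set (w0 := mv n P (mv n P v)).
    assert (Hw0 : forall j, (j < n)%nat -> w0 j = m * v j).
    { intros j Hj. rewrite HC, HQv by auto. fold w0. rewrite Pi_val by auto.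
      unfold w0. rewrite (ipP1 n P pi Hs Hrev), (ipP1 n P pi Hs Hrev), Hv1. ring. }
    set (sq := sqrt m).
    assert (Hsq : 0 < sq) by (apply sqrt_lt_R0; auto).
    assert (Hsq2 : sq * sq = m) by (apply sqrt_sqrt; lra).
    set (w := fun x => 1 * mv n P v x + sq * v x).
    destruct (classic (exists i, (i < n)%nat /\ w i <> 0)) as [[k [Hk Hwk]] | Hno].
    + assert (Hw : forall j, (j < n)%nat -> mv n P w j = sq * w j).
      { intros j Hj. unfold w at 1. rewrite mv_lin. fold w0. rewrite Hw0 by auto.
        unfold w. rewrite <- Hsq2. ring. }
      exists sq. split; [|split; auto].
      * exists w. split; [exists k; auto|]. intros j Hj. apply Hw; auto.
      * intros E1. rewrite E1 in Hw.
        destruct (eig1_const n P Hs w Hirr Hn) as [c Hc].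
        { intros j Hj. rewrite Hw; auto; ring. }
        assert (Ew : ip n pi w one = 0).
        { unfold w. rewrite ip_lin_l, (ipP1 n P pi Hs Hrev), Hv1. ring. }
        rewrite (ip_ext n pi w one (fun _ => c) one) in Ew; auto.
        rewrite ip_const_l, ip_one_one in Ew; auto.
        apply Hwk. rewrite Hc; auto. lra.
    + exists (- sq). split; [|split; [lra|ring_simplify; auto]].
      * exists v. split; [exists i; auto|]. intros j Hj.
        assert (w j = 0).
        { destruct (Req_dec (w j) 0); auto. exfalso. apply Hno. exists j; auto. }
        unfold w in H. change (rsum n (fun j0 => P j j0 * v j0)) with (mv n P v j). lra.
      * rewrite <- Hsq2; ring.
Qed.

Lemma m_lt1 : m < 1.
Proof.
  destruct (Rle_lt_or_eq_dec m 1 m_le1) as [H|H]; auto. exfalso.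
  destruct (eig_exists ltac:(lra)) as [mu [[v [Hvne Hv]] [Hmu1 Hmu2]]].
  assert (mu = -1).
  { rewrite H in Hmu2. assert ((mu - 1) * (mu + 1) = 0) by nra.
    apply Rmult_integral in H0. destruct H0; lra. }
  subst mu. apply (no_eig_m1 n P Hs v Hap Hn); auto.
  intros y Hy. unfold mv. rewrite Hv; auto. ring.
Qed.

Theorem spectral lam : slem n P lam ->
  0 <= lam /\ lam < 1 /\ forall g, ip n pi g one = 0 -> ip n pi (mv n P g) (mv n P g) <= lam * lam * ip n pi g g.
Proof.
  intros [Hub Hleast].
  assert (H0 : 0 <= lam) by (apply Hub; left; auto).
  assert (Hup : lam <= sqrt m).
  { apply Hleast. intros r [Hr | [mu [Hmu [Hmu1 Hr]]]].
    - subst; apply sqrt_pos.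
    - subst r. rewrite <- sqrt_Rsqr_abs. apply sqrt_le_1; [apply Rle_0_sqr| apply m_ge0 |].
      unfold Rsqr. apply eig_bound; auto. }
  assert (Hlow : m <= lam * lam).
  { destruct (Rle_lt_or_eq_dec 0 m m_ge0) as [Hm|Hm].
    - destruct (eig_exists Hm) as [mu [Hmu [Hmu1 Hmu2]]].
      assert (Rabs mu <= lam) by (apply Hub; right; exists mu; auto).
      assert (Rabs mu * Rabs mu = m) by (rewrite <- Hmu2; rewrite <- Rabs_mult; apply Rabs_pos_eq; nra).
      pose proof (Rabs_pos mu). nra.
    - rewrite <- Hm. nra. }
  split; auto. split.
  - apply Rle_lt_trans with (sqrt m); auto. rewrite <- sqrt_1. apply sqrt_lt_1; [apply m_ge0|lra|apply m_lt1].
  - intros g Hg.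
    assert (HQ : Q g = mv n P g).
    { apply functional_extensionality; intros x. unfold Q. apply mv_ext. intros; rewrite Pi_val, Hg; auto; ring. }
    rewrite <- HQ. eapply Rle_trans; [apply Qbound|].
    apply Rmult_le_compat_r; auto. apply ip_nn.
Qed.

End Spec.


Lemma Un_cv_const c : Un_cv (fun _ => c) c.
Proof. intros eps He. exists 0%nat. intros. unfold R_dist. rewrite Rminus_diag, Rabs_R0. auto. Qed.

Lemma rsum_cv k (F : nat -> nat -> R) (G : nat -> R) :
  (forall i, (i < k)%nat -> Un_cv (fun t => F t i) (G i)) ->
  Un_cv (fun t => rsum k (F t)) (rsum k G).
Proof.
  induction k; intros H.
  - rewrite rsum_0. replace (fun t => rsum 0 (F t)) with (fun _ : nat => 0).
    + apply Un_cv_const.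
    + apply functional_extensionality; intros; rewrite rsum_0; auto.
  - rewrite rsum_S. replace (fun t => rsum (S k) (F t)) with (fun t => rsum k (F t) + F t k).
    + apply CV_plus; auto.
    + apply functional_extensionality; intros; rewrite rsum_S; auto.
Qed.

Lemma cv_le u l B : Un_cv u l -> (forall t, u t <= B) -> l <= B.
Proof.
  intros Hu Hb. apply (@Rle_cv_lim u (fun _ => B) l B); auto. apply Un_cv_const.
Qed.

Lemma rsum_shift1 k f : rsum (S k) f = f 0%nat + rsum k (fun s => f (S s)).
Proof. replace (S k) with (1 + k)%nat by lia. rewrite rsum_split. rewrite rsum_S, rsum_0. f_equal. ring. Qed.

Section Hit.
Variables (n : nat) (P : nat -> nat -> R) (pi : nat -> R) (S : nat -> bool).

Definition shift (w : nat -> R) (z : nat) : R := rsum n (fun y => if S y then 0 else w y * P y z).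

Fixpoint W (w : nat -> R) (s : nat) : nat -> R :=
  match s with O => w | Datatypes.S s' => W (shift w) s' end.

Lemma hitsum t : forall w x, (x < n)%nat -> S x = true ->
  rsum n (fun y => w y * hit n P S t y x) = rsum (Datatypes.S t) (fun s => W w s x).
Proof.
  induction t; intros w x Hx HSx.
  - rewrite rsum_S, rsum_0. simpl.
    transitivity (rsum n (fun y => if Nat.eq_dec y x then w x else 0)).
    + apply rsum_ext; intros y Hy. destruct (Nat.eq_dec y x).
      * subst. rewrite HSx. destruct (Nat.eq_dec x x); [ring|congruence].
      * destruct (S y); [destruct (Nat.eq_dec y x); [congruence|]|]; ring.
    + rewrite rsum_delta'; auto. ring.
  - rewrite rsum_shift1. simpl W at 1.
    transitivity (rsum n (fun y => if Nat.eq_dec y x then w x else 0) +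
                  rsum n (fun y => if S y then 0 else w y * rsum n (fun z => P y z * hit n P S t z x))).
    + rewrite <- rsum_plus. apply rsum_ext; intros y Hy. simpl.
      destruct (Nat.eq_dec y x).
      * subst. rewrite HSx. destruct (Nat.eq_dec x x); [ring|congruence].
      * destruct (S y); [destruct (Nat.eq_dec y x); [congruence|]|]; ring.
    + rewrite rsum_delta' by auto. f_equal.
      change (fun s => W w (Datatypes.S s) x) with (fun s => W (shift w) s x). rewrite <- IHt by auto. unfold shift.
      transitivity (rsum n (fun y => rsum n (fun z => (if S y then 0 else w y * P y z) * hit n P S t z x))).
      * apply rsum_ext; intros y Hy. destruct (S y).
        -- rewrite (rsum_ext n _ (fun _ => 0)); [rewrite rsum_zero; ring|intros; ring].
        -- rewrite <- rsum_scal. apply rsum_ext; intros; ring.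
      * rewrite rsum_swap. apply rsum_ext; intros; rewrite rsum_scal_r; auto.
Qed.

Lemma W_succ s : forall w, W w (Datatypes.S s) = shift (W w s).
Proof.
  induction s; intros w; [reflexivity|].
  change (W w (Datatypes.S (Datatypes.S s))) with (W (shift w) (Datatypes.S s)).
  rewrite IHs. reflexivity.
Qed.

Fixpoint vf (s : nat) : nat -> R :=
  match s with
  | O => one
  | Datatypes.S s' => fun y => if S y then 0 else mv n P (vf s') y
  end.

Hypothesis Hs : stochastic n P.
Hypothesis Hrev : reversible n P pi.

Lemma W_pi s : forall z, (z < n)%nat -> W pi s z = pi z * mv n P (vf s) z.
Proof.
  induction s; intros z Hz.
  - simpl. unfold one. rewrite mv_const; auto. ring.
  - rewrite W_succ. unfold shift.
    transitivity (rsum n (fun y => pi z * (P z y * (if S y then 0 else mv n P (vf s) y)))).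
    + apply rsum_ext; intros y Hy. rewrite IHs by auto.
      destruct (S y); [ring|].
      replace (pi y * mv n P (vf s) y * P y z) with ((pi y * P y z) * mv n P (vf s) y) by ring.
      rewrite (Hrev y z) by auto. ring.
    + rewrite rsum_scal. reflexivity.
Qed.

Definition aseq (A : nat -> bool) (s : nat) : R :=
  rsum n (fun x => if A x then pi x * mv n P (vf s) x else 0).

Lemma U_eq (A : nat -> bool) t :
  (forall x, (x < n)%nat -> A x = true -> S x = true) ->
  rsum n (fun x => if A x then rsum n (fun y => pi y * hit n P S t y x) else 0) =
  rsum (Datatypes.S t) (aseq A).
Proof.
  intros HAS. unfold aseq.
  transitivity (rsum n (fun x => rsum (Datatypes.S t) (fun s => if A x then pi x * mv n P (vf s) x else 0))).
  - apply rsum_ext; intros x Hx. destruct (A x) eqn:EA.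
    + rewrite hitsum by auto. apply rsum_ext; intros; apply W_pi; auto.
    + rewrite rsum_zero; auto.
  - apply rsum_swap.
Qed.

End Hit.

Lemma harm_limit (n : nat) (P : nat -> nat -> R) (pi : nat -> R) (S A : nat -> bool) (h : nat -> nat -> R) :
  harmonic_from n P S h ->
  Un_cv (fun t => rsum n (fun x => if A x then rsum n (fun y => pi y * hit n P S t y x) else 0))
        (harm_stat n pi h A).
Proof.
  intros Hh. unfold harm_stat.
  apply (rsum_cv n (fun t x => if A x then rsum n (fun y => pi y * hit n P S t y x) else 0)).
  intros x Hx. destruct (A x).
  - apply (rsum_cv n (fun t y => pi y * hit n P S t y x)).
    intros y Hy. apply CV_mult; [apply Un_cv_const|]. apply Hh; auto.
  - apply Un_cv_const.
Qed.


Section Bounds.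
Variables (n : nat) (P : nat -> nat -> R) (pi : nat -> R) (S A : nat -> bool) (lam : R).
Hypothesis Hs : stochastic n P.
Hypothesis Hpi : prob_measure n pi.
Hypothesis Hrev : reversible n P pi.
Hypothesis Hpos : forall x, (x < n)%nat -> 0 < pi x.
Hypothesis Hlam0 : 0 <= lam.
Hypothesis Hlam1 : lam < 1.
Hypothesis HSP : forall g, ip n pi g one = 0 -> ip n pi (mv n P g) (mv n P g) <= lam * lam * ip n pi g g.

Let pinn : forall x, (x < n)%nat -> 0 <= pi x.
Proof. intros; apply Rlt_le; auto. Qed.

Let v := vf n P S.

Lemma v_bounds s y : (y < n)%nat -> 0 <= v s y <= 1 /\ 0 <= mv n P (v s) y <= 1.
Proof.
  revert y. induction s; intros y Hy.
  - unfold v; simpl. unfold one. rewrite mv_const; auto. lra.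
  - assert (HPv : 0 <= mv n P (v s) y <= 1).
    { split.
      - unfold mv. apply rsum_nonneg. intros z Hz. destruct Hs as [H0 _].
        apply Rmult_le_pos; auto. apply (IHs z Hz).
      - rewrite <- (mv_const n P 1 y Hs Hy). apply mv_mono; auto. intros z Hz; apply (IHs z Hz). }
    assert (Hv : 0 <= v (Datatypes.S s) y <= 1).
    { unfold v; simpl. fold v. destruct (S y); lra. }
    split; auto. split.
    + unfold mv. apply rsum_nonneg. intros z Hz. destruct Hs as [H0 _].
      apply Rmult_le_pos; auto. unfold v; simpl; fold v.
      destruct (S z); [lra|]. apply (IHs z Hz).
    + rewrite <- (mv_const n P 1 y Hs Hy). apply mv_mono; auto. intros z Hz.
      unfold v; simpl; fold v. destruct (S z); [lra|]. apply (IHs z Hz).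
Qed.

Lemma v_step s y : (y < n)%nat -> v (Datatypes.S s) y <= mv n P (v s) y.
Proof.
  intros Hy. unfold v; simpl; fold v. destruct (S y); [apply (v_bounds s y Hy)|lra].
Qed.

Fixpoint iterP (j : nat) (f : nat -> R) : nat -> R :=
  match j with O => f | Datatypes.S j' => mv n P (iterP j' f) end.

Lemma iter_bound k r x : (x < n)%nat -> mv n P (v (k + r)) x <= iterP (Datatypes.S k) (v r) x.
Proof.
  revert x. induction k; intros x Hx.
  - simpl. lra.
  - change (iterP (Datatypes.S (Datatypes.S k)) (v r) x) with (mv n P (iterP (Datatypes.S k) (v r)) x).
    apply Rle_trans with (mv n P (mv n P (v (k + r))) x).
    + apply mv_mono; auto. intros y Hy. simpl plus. apply v_step; auto.
    + apply mv_mono; auto.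
Qed.

Lemma iter_const j c g x : (x < n)%nat ->
  iterP j (fun y => c * one y + 1 * g y) x = c + iterP j g x.
Proof.
  revert x. induction j; intros x Hx.
  - simpl. unfold one. ring.
  - simpl. rewrite (mv_ext n P _ (fun y => c * one y + 1 * iterP j g y)).
    + rewrite mv_lin. unfold one. rewrite mv_const; auto. ring.
    + intros y Hy. rewrite IHj; auto. unfold one; ring.
Qed.

Lemma iter_perp j g : ip n pi g one = 0 -> ip n pi (iterP j g) one = 0.
Proof.
  intros H. induction j; simpl; auto. rewrite (ipP1 n P pi Hs Hrev). auto.
Qed.

Lemma iter_norm j g : ip n pi g one = 0 ->
  ip n pi (iterP j g) (iterP j g) <= lam ^ (2 * j) * ip n pi g g.
Proof.
  intros H. induction j.
  - simpl. lra.
  - simpl iterP. eapply Rle_trans; [apply HSP, iter_perp; auto|].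
    replace (2 * Datatypes.S j)%nat with (Datatypes.S (Datatypes.S (2 * j))) by lia.
    replace (lam ^ (Datatypes.S (Datatypes.S (2 * j)))) with (lam * lam * lam ^ (2 * j)) by (simpl; ring). assert (0 <= lam * lam) by nra.
    apply Rle_trans with (lam * lam * (lam ^ (2 * j) * ip n pi g g)); [apply Rmult_le_compat_l; auto|right; ring].
Qed.

Lemma ip_le_sqrt a h : 0 <= ip n pi a a -> ip n pi a h <= sqrt (ip n pi a a) * sqrt (ip n pi h h).
Proof.
  intros Ha. rewrite <- sqrt_mult; auto; [|apply ip_nonneg; auto].
  pose proof (ip_CS n pi a h pinn).
  apply Rle_trans with (Rabs (ip n pi a h)); [apply Rle_abs|].
  rewrite <- sqrt_Rsqr_abs. apply sqrt_le_1; [apply Rle_0_sqr| |unfold Rsqr; auto].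
  apply Rmult_le_pos; apply ip_nonneg; auto.
Qed.

Definition indA : nat -> R := fun x => if A x then 1 else 0.
Definition alpha : R := measure n pi A.
Definition sigma : R := measure n pi S.

Lemma alpha_ip1 : ip n pi indA one = alpha.
Proof. unfold ip, indA, one, alpha, measure. apply rsum_ext; intros. destruct (A i); ring. Qed.

Lemma alpha_ip2 : ip n pi indA indA = alpha.
Proof. unfold ip, indA, alpha, measure. apply rsum_ext; intros. destruct (A i); ring. Qed.

Lemma alpha_nn : 0 <= alpha.
Proof. rewrite <- alpha_ip2. apply ip_nonneg; auto. Qed.

Definition Nv (r : nat) : R := sqrt (ip n pi (v r) (v r)).

Lemma aseq_ip s : aseq n P pi S A s = ip n pi indA (mv n P (v s)).
Proof. unfold aseq, ip, indA. apply rsum_ext; intros. destruct (A i); unfold v; ring. Qed.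

Lemma key k r : aseq n P pi S A (k + r) <= Nv r * (alpha + sqrt alpha * lam ^ (Datatypes.S k)).
Proof.
  rewrite aseq_ip.
  set (c := ip n pi (v r) one).
  set (gr := fun y => v r y - c).
  assert (Hvr : v r = fun y => c * one y + 1 * gr y).
  { apply functional_extensionality; intros; unfold gr, one; ring. }
  assert (Hgr : ip n pi gr one = 0).
  { unfold gr. rewrite (ip_ext n pi _ one (fun y => 1 * v r y + (- c) * one y) one); auto.
    - rewrite ip_lin_l, ip_one_one; auto. fold c. ring.
    - intros; unfold one; ring. }
  apply Rle_trans with (ip n pi indA (iterP (Datatypes.S k) (v r))).
  { unfold ip. apply rsum_le. intros x Hx. unfold indA. destruct (A x); [|lra].
    rewrite !Rmult_1_r. apply Rmult_le_compat_l; auto. apply iter_bound; auto. }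
  rewrite (ip_ext n pi indA (iterP (Datatypes.S k) (v r)) indA (fun x => c * one x + 1 * iterP (Datatypes.S k) gr x)); auto;
   [| intros x Hx; rewrite Hvr, iter_const; auto; unfold one; ring].
  rewrite ip_lin_r, alpha_ip1.
  pose proof (ip_le_sqrt indA (iterP (Datatypes.S k) gr) ltac:(apply ip_nonneg; auto)) as HCS.
  rewrite alpha_ip2 in HCS.
  assert (Hvv : 0 <= ip n pi (v r) (v r)) by (apply ip_nonneg; auto).
  assert (Hgg : ip n pi gr gr <= ip n pi (v r) (v r)).
  { assert (E : ip n pi gr gr = ip n pi (v r) (v r) - c * c).
    { rewrite (ip_ext n pi gr gr (fun y => 1 * v r y + (- c) * one y) (fun y => 1 * v r y + (- c) * one y));
        [|intros; unfold gr, one; ring|intros; unfold gr, one; ring].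
      repeat rewrite ip_lin_l. repeat rewrite ip_lin_r. rewrite ip_one_one; auto.
      rewrite (ip_sym n pi one (v r)). fold c. ring. }
    pose proof (Rle_0_sqr c). unfold Rsqr in H. lra. }
  assert (Hc : c <= Nv r).
  { unfold Nv. pose proof (ip_le_sqrt (v r) one Hvv) as H. fold c in H.
    rewrite ip_one_one, sqrt_1 in H; auto. lra. }
  assert (Hit : sqrt (ip n pi (iterP (Datatypes.S k) gr) (iterP (Datatypes.S k) gr)) <= lam ^ (Datatypes.S k) * Nv r).
  { unfold Nv. rewrite <- (sqrt_pow2 (lam ^ (Datatypes.S k))) by (apply pow_le; auto).
    rewrite <- sqrt_mult by (try apply pow2_ge_0; auto).
    apply sqrt_le_1; [apply ip_nonneg; auto| apply Rmult_le_pos; [apply pow2_ge_0|auto]|].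
    eapply Rle_trans; [apply iter_norm; auto|].
    rewrite <- pow_mult. rewrite Nat.mul_comm. apply Rmult_le_compat_l; [|auto].
    apply pow_le; auto. }
  pose proof alpha_nn. pose proof (sqrt_pos alpha).
  assert (0 <= Nv r) by apply sqrt_pos.
  assert (0 <= lam ^ Datatypes.S k) by (apply pow_le; auto).
  apply Rle_trans with (c * alpha + sqrt alpha * (lam ^ Datatypes.S k * Nv r)).
  - rewrite Rmult_1_l. apply Rplus_le_compat; [right; ring|].
    eapply Rle_trans; [exact HCS|]. apply Rmult_le_compat_l; auto.
  - assert (c * alpha <= Nv r * alpha) by (apply Rmult_le_compat_r; auto). nra.
Qed.

Definition notS : nat -> R := fun y => if S y then 0 else 1.

Lemma sigma_nn : 0 <= sigma.
Proof. unfold sigma, measure. apply rsum_nonneg. intros. destruct (S i); [apply pinn; auto|lra]. Qed.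

Lemma ip_notS : ip n pi notS notS = 1 - sigma.
Proof.
  destruct Hpi as [_ Hsum]. unfold sigma, measure. rewrite <- Hsum, <- rsum_minus.
  unfold ip, notS. apply rsum_ext; intros. destruct (S i); ring.
Qed.

Lemma sigma_le1 : sigma <= 1.
Proof. pose proof (ip_nonneg n pi notS pinn). rewrite ip_notS in H. lra. Qed.

Definition q : R := 1 - (1 - lam) * sigma.

Lemma q_bounds : 0 <= q <= 1.
Proof. unfold q. pose proof sigma_nn. pose proof sigma_le1. split; nra. Qed.

Lemma decay_step r : ip n pi (v (Datatypes.S (Datatypes.S r))) (v (Datatypes.S (Datatypes.S r))) <=
   q * ip n pi (v (Datatypes.S r)) (v (Datatypes.S r)).
Proof.
  set (f := v (Datatypes.S r)).
  set (X := ip n pi f f).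
  set (c := ip n pi f one).
  set (gr := fun y => 1 * f y + (- c) * one y).
  assert (Hgr : ip n pi gr one = 0).
  { unfold gr. rewrite ip_lin_l, ip_one_one; auto. fold c. ring. }
  assert (HX : 0 <= X) by (apply ip_nonneg; auto).
  assert (Ha : ip n pi (v (Datatypes.S (Datatypes.S r))) (v (Datatypes.S (Datatypes.S r))) <= ip n pi (mv n P f) (mv n P f)).
  { unfold ip. apply rsum_le. intros y Hy. unfold v; simpl; fold v. fold f.
    destruct (S y).
    - rewrite !Rmult_0_r. rewrite Rmult_assoc. apply Rmult_le_pos; [apply pinn; auto|apply Rle_0_sqr].
    - right; reflexivity. }
  assert (Hb : ip n pi (mv n P f) (mv n P f) = c * c + ip n pi (mv n P gr) (mv n P gr)).
  { rewrite (ip_ext n pi (mv n P f) (mv n P f) (fun x => c * one x + 1 * mv n P gr x) (fun x => c * one x + 1 * mv n P gr x)).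
    - repeat rewrite ip_lin_l. repeat rewrite ip_lin_r. rewrite ip_one_one; auto.
      rewrite (ip_sym n pi one (mv n P gr)), (ipP1 n P pi Hs Hrev), Hgr. ring.
    - intros x Hx. unfold gr. rewrite mv_lin. unfold one at 2. rewrite mv_const; auto. unfold one; ring.
    - intros x Hx. unfold gr. rewrite mv_lin. unfold one at 2. rewrite mv_const; auto. unfold one; ring. }
  assert (Hgg : ip n pi gr gr = X - c * c).
  { unfold gr. repeat rewrite ip_lin_l. repeat rewrite ip_lin_r. rewrite ip_one_one; auto.
    rewrite (ip_sym n pi one f). fold c X. ring. }
  assert (Hc : c * c <= X * (1 - sigma)).
  { assert (E : c = ip n pi f notS).
    { unfold c, ip. apply rsum_ext. intros y Hy. unfold notS, one, f, v; simpl. destruct (S y); ring. }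
    rewrite E, <- ip_notS. apply ip_CS; auto. }
  pose proof (HSP gr Hgr) as HP. rewrite Hgg in HP.
  pose proof sigma_nn. pose proof sigma_le1.
  fold f X. unfold q.
  assert (E1 : lam * lam <= lam) by nra.
  assert (0 <= c * c) by (apply Rle_0_sqr).
  assert (X * (1 - lam * lam) * sigma >= X * (1 - lam) * sigma).
  { apply Rle_ge. apply Rmult_le_compat_r; auto. apply Rmult_le_compat_l; auto. lra. }
  assert ((1 - lam * lam) * (c * c) <= (1 - lam * lam) * (X * (1 - sigma))) by (apply Rmult_le_compat_l; nra).
  nra.
Qed.

Lemma decay r : ip n pi (v (Datatypes.S r)) (v (Datatypes.S r)) <= q ^ r.
Proof.
  induction r.
  - rewrite pow_O. rewrite <- (ip_one_one n pi Hpi). unfold ip. apply rsum_le. intros y Hy.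
    unfold one. destruct (v_bounds 1 y Hy) as [[H1 H2] _].
    pose proof (pinn y Hy). rewrite !Rmult_assoc. apply Rmult_le_compat_l; auto. nra.
  - eapply Rle_trans; [apply decay_step|]. simpl. pose proof q_bounds.
    apply Rmult_le_compat_l; [lra|auto].
Qed.

Lemma sqrt_pow_gen x r : 0 <= x -> sqrt (x ^ r) = sqrt x ^ r.
Proof.
  intros Hx. induction r.
  - simpl. apply sqrt_1.
  - simpl. rewrite sqrt_mult; auto; [rewrite IHr; auto|apply pow_le; auto].
Qed.

Lemma Nv_decay r : Nv (Datatypes.S r) <= sqrt q ^ r.
Proof.
  unfold Nv. rewrite <- sqrt_pow_gen by (apply q_bounds). apply sqrt_le_1; [apply ip_nonneg; auto|apply pow_le, q_bounds|apply decay].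
Qed.

Lemma aseq_le_alpha s : aseq n P pi S A s <= alpha.
Proof.
  unfold aseq, alpha, measure. apply rsum_le. intros x Hx. destruct (A x); [|lra].
  destruct (v_bounds s x Hx) as [_ [H1 H2]]. pose proof (pinn x Hx). unfold v in H2. nra.
Qed.

Lemma aseq_nn s : 0 <= aseq n P pi S A s.
Proof.
  unfold aseq. apply rsum_nonneg. intros x Hx. destruct (A x); [|lra].
  destruct (v_bounds s x Hx) as [_ [H1 H2]]. pose proof (pinn x Hx). unfold v in H1. nra.
Qed.

Lemma a_pair m : aseq n P pi S A (2 * m + 1) + aseq n P pi S A (2 * m + 2) <=
  2 * (sqrt q ^ m * alpha + sqrt alpha * lam ^ m).
Proof.
  pose proof alpha_nn. pose proof (sqrt_pos alpha). pose proof q_bounds.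
  assert (Hr0 : 0 <= sqrt q) by apply sqrt_pos.
  assert (Hr1 : sqrt q <= 1) by (rewrite <- sqrt_1; apply sqrt_le_1; lra).
  assert (Hl : 0 <= lam ^ m) by (apply pow_le; auto).
  assert (Hlm : lam ^ Datatypes.S m <= lam ^ m) by (simpl; assert (lam * lam ^ m <= 1 * lam ^ m) by (apply Rmult_le_compat_r; lra); lra).
  assert (Hrm : 0 <= sqrt q ^ m) by (apply pow_le; auto).
  assert (Hrm1 : sqrt q ^ Datatypes.S m <= sqrt q ^ m) by (simpl; assert (sqrt q * sqrt q ^ m <= 1 * sqrt q ^ m) by (apply Rmult_le_compat_r; lra); lra).
  assert (Hrle1 : sqrt q ^ m <= 1) by (rewrite <- (pow1 m); apply pow_incr; lra).
  assert (Hk : forall r, Nv r <= sqrt q ^ m -> aseq n P pi S A (m + r) <= sqrt q ^ m * alpha + sqrt alpha * lam ^ m).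
  { intros r Hr. eapply Rle_trans; [apply key|].
    assert (0 <= Nv r) by apply sqrt_pos.
    assert (0 <= sqrt alpha * lam ^ Datatypes.S m) by (apply Rmult_le_pos; auto; apply pow_le; auto).
    apply Rle_trans with (sqrt q ^ m * (alpha + sqrt alpha * lam ^ Datatypes.S m)).
    - apply Rmult_le_compat_r; lra.
    - assert (sqrt alpha * lam ^ Datatypes.S m <= sqrt alpha * lam ^ m) by (apply Rmult_le_compat_l; auto).
      assert (sqrt q ^ m * (sqrt alpha * lam ^ m) <= 1 * (sqrt alpha * lam ^ m)) by (apply Rmult_le_compat_r; nra).
      nra. }
  replace (2 * m + 1)%nat with (m + Datatypes.S m)%nat by lia.
  replace (2 * m + 2)%nat with (m + Datatypes.S (Datatypes.S m))%nat by lia.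
  pose proof (Hk (Datatypes.S m) (Nv_decay m)).
  pose proof (Hk (Datatypes.S (Datatypes.S m)) (Rle_trans _ _ _ (Nv_decay (Datatypes.S m)) Hrm1)).
  lra.
Qed.

End Bounds.


Lemma rsum_pairs N f : rsum (1 + 2 * N) f = f 0%nat + rsum N (fun m => f (2 * m + 1)%nat + f (2 * m + 2)%nat).
Proof.
  induction N.
  - simpl. rewrite rsum_S, !rsum_0. ring.
  - replace (1 + 2 * Datatypes.S N)%nat with (Datatypes.S (Datatypes.S (1 + 2 * N))) by lia.
    rewrite (rsum_S (Datatypes.S (1 + 2 * N))), (rsum_S (1 + 2 * N)), IHN, (rsum_S N).
    replace (Datatypes.S (1 + 2 * N)) with (2 * N + 2)%nat by lia.
    replace (1 + 2 * N)%nat with (2 * N + 1)%nat by lia. ring.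
Qed.

Lemma geom_le x N : 0 <= x < 1 -> rsum N (fun m => x ^ m) <= / (1 - x).
Proof.
  intros Hx.
  assert (E : rsum N (fun m => x ^ m) * (1 - x) = 1 - x ^ N).
  { induction N; [rewrite rsum_0; simpl; ring|]. rewrite rsum_S. simpl. 
    replace ((rsum N (fun m => x ^ m) + x ^ N) * (1 - x)) with (rsum N (fun m => x ^ m) * (1 - x) + x ^ N * (1 - x)) by ring.
    rewrite IHN. ring. }
  assert (0 <= x ^ N) by (apply pow_le; lra).
  apply Rmult_le_reg_r with (r := 1 - x); [lra|]. rewrite E, Rinv_l by lra. lra.
Qed.

Lemma rsum_const N c : rsum N (fun _ => c) = INR N * c.
Proof. induction N; [rewrite rsum_0; simpl; ring|]. rewrite rsum_S, IHN, S_INR. ring. Qed.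

Lemma exp_pow a k : exp a ^ k = exp (a * INR k).
Proof.
  induction k; [simpl; rewrite Rmult_0_r, exp_0; auto|].
  simpl pow. rewrite IHk, <- exp_plus, S_INR. f_equal. ring.
Qed.

Lemma exp_le_mono a b : a <= b -> exp a <= exp b.
Proof. intros H. destruct (Rle_lt_or_eq_dec a b H); [left; apply exp_increasing; auto|subst; lra]. Qed.

Lemma pow_le_exp l k : 0 <= l -> l ^ k <= exp (- (1 - l) * INR k).
Proof.
  intros Hl. rewrite <- exp_pow. apply pow_incr. split; auto.
  pose proof (exp_ineq1_le (- (1 - l))). lra.
Qed.

Lemma exp_half_ln y : 0 < y -> exp (- ln (/ y) / 2) = sqrt y.
Proof.
  intros Hy. rewrite ln_Rinv by auto.
  assert (E : exp (- - ln y / 2) * exp (- - ln y / 2) = y).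
  { rewrite <- exp_plus. replace (- - ln y / 2 + - - ln y / 2) with (ln y) by field. apply exp_ln; auto. }
  assert (0 <= exp (- - ln y / 2)) by (apply Rlt_le, exp_pos).
  rewrite <- (sqrt_square (exp (- - ln y / 2))) by auto. rewrite E. reflexivity.
Qed.

Lemma ln_le_sub1 x : 0 < x -> ln x <= x - 1.
Proof. intros Hx. pose proof (exp_ineq1_le (ln x)). rewrite exp_ln in H by auto. lra. Qed.

Lemma cs_bound (T N : nat) al sa l : 0 <= al -> 0 <= sa -> 0 <= l < 1 ->
  rsum N (fun m => if Nat.ltb m T then al else sa * l ^ m) <= INR T * al + sa * l ^ T / (1 - l).
Proof.
  intros Hal Hsa Hl.
  set (c := fun m => if Nat.ltb m T then al else sa * l ^ m).
  assert (Hc : forall m, 0 <= c m).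
  { intros m. unfold c. destruct (Nat.ltb m T); auto. apply Rmult_le_pos; auto. apply pow_le; lra. }
  apply Rle_trans with (rsum (T + N) c); [apply rsum_mono_len; auto; lia|].
  rewrite rsum_split.
  rewrite (rsum_ext T c (fun _ => al)), rsum_const.
  2: { intros i Hi. unfold c. destruct (Nat.ltb_spec i T); [auto|lia]. }
  apply Rplus_le_compat_l.
  rewrite (rsum_ext N _ (fun i => (sa * l ^ T) * l ^ i)).
  2: { intros i Hi. unfold c. destruct (Nat.ltb_spec (T + i) T); [lia|]. rewrite pow_add. ring. }
  rewrite rsum_scal. unfold Rdiv. apply Rmult_le_compat_l.
  - apply Rmult_le_pos; auto. apply pow_le; lra.
  - apply geom_le; auto.
Qed.

Lemma final_bound (a : nat -> R) al sg eps l t :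
  0 < eps < / 4 -> 0 <= l < 1 -> 0 <= al -> al <= eps * sg -> 0 <= sg <= 1 ->
  (forall s, 0 <= a s <= al) ->
  (forall m, a (2 * m + 1)%nat + a (2 * m + 2)%nat <= 2 * (sqrt (1 - (1 - l) * sg) ^ m * al + sqrt al * l ^ m)) ->
  rsum (Datatypes.S t) a <= 11 * (eps * ln (1 / eps)) / (1 - l).
Proof.
  intros Heps Hl Hal Halsg Hsg Ha Hpair.
  set (g := 1 - l).
  assert (Hg : 0 < g /\ g <= 1) by (unfold g; lra).
  set (L := ln (1 / eps)).
  assert (HL : 1 < L).
  { assert (H4 : 4 < / eps).
    { replace 4 with (/ / 4) by (rewrite Rinv_inv; auto). apply Rinv_lt_contravar; [|lra].
      apply Rmult_lt_0_compat; lra. }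
    assert (H5 : exp 1 < 1 / eps) by (unfold Rdiv; rewrite Rmult_1_l; pose proof exp_le_3; lra).
    assert (H6 : ln (exp 1) < ln (1 / eps)) by (apply ln_increasing; [apply exp_pos|auto]).
    rewrite ln_exp in H6. auto. }
  assert (HK : 0 <= eps / g) by (apply Rmult_le_pos; [lra|apply Rlt_le, Rinv_0_lt_compat; lra]).
  replace (11 * (eps * ln (1 / eps)) / (1 - l)) with (11 * (eps / g) * L) by (unfold g, L; field; lra).
  destruct (Rle_lt_or_eq_dec 0 al Hal) as [Halp | Hal0].
  2: { apply Rle_trans with (rsum (Datatypes.S t) (fun _ => 0)).
       - apply rsum_le. intros i _. rewrite Hal0. apply Ha.
       - rewrite rsum_zero. nra. }
  assert (Hsgp : 0 < sg).
  { destruct (Rle_lt_or_eq_dec 0 sg (proj1 Hsg)); auto. subst sg. lra. }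
  set (rho := sqrt (1 - g * sg)).
  assert (Hq : 0 <= 1 - g * sg < 1) by (split; nra).
  assert (Hrho : 0 <= rho < 1).
  { unfold rho. split; [apply sqrt_pos|]. apply Rlt_le_trans with (sqrt 1); [apply sqrt_lt_1; lra|rewrite sqrt_1; lra]. }
  assert (Hrho2 : rho * rho = 1 - g * sg) by (apply sqrt_sqrt; lra).
  assert (Hinvr : / (1 - rho) <= 2 / (g * sg)).
  { replace (2 / (g * sg)) with (/ (g * sg / 2)) by (field; split; lra).
    apply Rinv_le_contravar; [apply Rmult_lt_0_compat; [nra|lra]|]. nra. }
  set (y := eps * sg).
  assert (Hy : 0 < y < 1) by (unfold y; split; nra).
  set (X := ln (/ y) / (2 * g)).
  assert (HlnY : 0 < ln (/ y)).
  { rewrite <- ln_1. apply ln_increasing; [lra|]. replace 1 with (/ 1) by apply Rinv_1.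
    apply Rinv_lt_contravar; lra. }
  assert (HX : 0 <= X) by (unfold X; apply Rlt_le, Rdiv_lt_0_compat; lra).
  set (T := Z.to_nat (up X)).
  assert (HT : X <= INR T <= X + 1).
  { destruct (archimed X) as [H1 H2].
    assert (Hup : (0 <= up X)%Z).
    { apply le_IZR. lra. }
    unfold T. rewrite INR_IZR_INZ, Z2Nat.id by auto. lra. }
  assert (HlT : l ^ T <= sqrt y).
  { eapply Rle_trans; [apply pow_le_exp; lra|].
    rewrite <- exp_half_ln by lra. apply exp_le_mono. fold g.
    unfold X in HT. apply Rmult_le_reg_r with (r := 2 / g); [apply Rdiv_lt_0_compat; lra|].
    replace (- g * INR T * (2 / g)) with (- 2 * INR T) by (field; lra).
    replace (- ln (/ y) / 2 * (2 / g)) with (- (ln (/ y) / g)) by (field; lra).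
    destruct HT as [HT1 _]. unfold Rdiv in HT1 |- *.
    replace (ln (/ y) * / (2 * g)) with (/ 2 * (ln (/ y) * / g)) in HT1 by (field; lra). lra. }
  set (c := fun m => if Nat.ltb m T then al else sqrt al * l ^ m).
  assert (HA : rsum (Datatypes.S t) a <= al + 2 * al * rsum (Datatypes.S t) (fun m => rho ^ m) + 2 * rsum (Datatypes.S t) c).
  { apply Rle_trans with (rsum (1 + 2 * Datatypes.S t) a).
    { apply rsum_mono_len; [lia|]. intros; apply Ha. }
    rewrite rsum_pairs. 
    assert (rsum (Datatypes.S t) (fun m => a (2 * m + 1)%nat + a (2 * m + 2)%nat) <=
       2 * al * rsum (Datatypes.S t) (fun m => rho ^ m) + 2 * rsum (Datatypes.S t) c); [|pose proof (Ha 0%nat); lra].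
    rewrite <- !rsum_scal, <- rsum_plus. apply rsum_le. intros m _.
    unfold c. destruct (Nat.ltb m T).
    - pose proof (Ha (2 * m + 1)%nat). pose proof (Ha (2 * m + 2)%nat).
      assert (0 <= rho ^ m) by (apply pow_le; lra). nra.
    - pose proof (Hpair m). fold g in H. fold rho in H. lra. }
  pose proof (geom_le rho (Datatypes.S t) Hrho) as HG.
  pose proof (cs_bound T (Datatypes.S t) al (sqrt al) l Hal (sqrt_pos al) Hl) as HC. fold c in HC.
  assert (Hsa : sqrt al <= sqrt y) by (apply sqrt_le_1; unfold y in *; lra).
  assert (Hsy : sqrt y * sqrt y = y) by (apply sqrt_sqrt; lra).
  assert (HC2 : sqrt al * l ^ T / (1 - l) <= y / g).
  { unfold Rdiv. fold g. apply Rmult_le_compat_r; [apply Rlt_le, Rinv_0_lt_compat; lra|].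
    rewrite <- Hsy. apply Rmult_le_compat; auto; [apply sqrt_pos|apply pow_le; lra]. }
  assert (HTal : INR T * al <= (X + 1) * y).
  { apply Rmult_le_compat; [apply pos_INR|lra|lra|unfold y in *; lra]. }
  assert (HXy : (X + 1) * y <= (eps * L + eps) / (2 * g) + eps).
  { assert (Hln : ln (/ y) = L + ln (/ sg)).
    { unfold y. rewrite Rinv_mult, ln_mult by (apply Rinv_0_lt_compat; lra). unfold L, Rdiv. rewrite Rmult_1_l. auto. }
    unfold X. rewrite Hln.
    assert (Hl1 : sg * ln (/ sg) <= 1).
    { pose proof (ln_le_sub1 (/ sg) ltac:(apply Rinv_0_lt_compat; lra)).
      apply Rle_trans with (sg * (/ sg - 1)); [apply Rmult_le_compat_l; lra|].
      rewrite Rmult_minus_distr_l, Rinv_r by lra. lra. }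
    unfold y.
    replace (((L + ln (/ sg)) / (2 * g) + 1) * (eps * sg)) with
      ((eps * (sg * L) + eps * (sg * ln (/ sg))) / (2 * g) + eps * sg) by (field; lra).
    assert (eps * (sg * L) <= eps * L) by (apply Rmult_le_compat_l; nra).
    assert (eps * (sg * ln (/ sg)) <= eps) by (rewrite <- (Rmult_1_r eps) at 2; apply Rmult_le_compat_l; lra).
    assert (eps * sg <= eps) by nra.
    unfold Rdiv. assert (0 < / (2 * g)) by (apply Rinv_0_lt_compat; lra). nra. }
  assert (Hgeo : 2 * al * rsum (Datatypes.S t) (fun m => rho ^ m) <= 4 * (eps / g)).
  { apply Rle_trans with (2 * al * (2 / (g * sg))).
    - apply Rmult_le_compat_l; [lra|]. lra.
    - unfold Rdiv. replace (2 * al * (2 * / (g * sg))) with (4 * (al / sg) * / g) by (field; lra).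
      rewrite Rmult_assoc. apply Rmult_le_compat_l; [lra|]. apply Rmult_le_compat_r; [apply Rlt_le, Rinv_0_lt_compat; lra|].
      unfold Rdiv. apply Rmult_le_reg_r with (r := sg); auto. rewrite Rmult_assoc, Rinv_l by lra. lra. }
  assert (Hepsg : eps <= eps / g).
  { unfold Rdiv. rewrite <- (Rmult_1_r eps) at 1. apply Rmult_le_compat_l; [lra|].
    rewrite <- Rinv_1. apply Rinv_le_contravar; lra. }
  assert (Hyg : y / g <= eps / g).
  { unfold Rdiv. apply Rmult_le_compat_r; [apply Rlt_le, Rinv_0_lt_compat; lra|]. unfold y. nra. }
  assert (HEL : (eps * L + eps) / (2 * g) = (eps / g) * L / 2 + (eps / g) / 2) by (field; lra).
  assert (al <= eps) by nra.
  nra.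
Qed.


Theorem mainTheorem7 :
  exists C : R, 0 < C /\
  exists eps0 : R, 0 < eps0 /\
  forall eps : R, 0 < eps < eps0 ->
  forall (n : nat) (P : nat -> nat -> R) (pi : nat -> R),
    stochastic n P -> irreducible n P -> aperiodic n P ->
    prob_measure n pi -> reversible n P pi ->
  forall lam : R, slem n P lam ->
  forall (A S : nat -> bool) (h : nat -> nat -> R),
    (forall x, (x < n)%nat -> A x = true -> S x = true) ->
    measure n pi A <= eps * measure n pi S ->
    harmonic_from n P S h ->
    harm_stat n pi h A <= C * (eps * ln (1 / eps)) / (1 - lam).
Proof.
  exists 11. split; [lra|]. exists (/ 4). split; [lra|].
  intros eps Heps n P pi Hs Hirr Hap Hpi Hrev lam Hslem A S h HAS HAeps Hh.
  assert (Hn : (1 <= n)%nat).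
  { destruct n; [|lia]. exfalso. destruct Hpi as [_ H]. rewrite rsum_0 in H. lra. }
  assert (Hpos : forall x, (x < n)%nat -> 0 < pi x) by (apply pi_pos with P; auto).
  destruct (spectral n P pi Hs Hpi Hrev Hpos Hirr Hap Hn lam Hslem) as [Hl0 [Hl1 HSP]].
  apply (cv_le _ _ _ (harm_limit n P pi S A h Hh)).
  intros t. rewrite (U_eq n P pi S Hs Hrev A t HAS).
  apply (final_bound (aseq n P pi S A) (alpha n pi A) (sigma n pi S) eps lam t).
  - auto.
  - auto.
  - apply alpha_nn; auto.
  - exact HAeps.
  - split; [apply sigma_nn; auto|apply sigma_le1; auto].
  - intros s; split; [apply aseq_nn; auto|apply aseq_le_alpha; auto].
  - intros m. exact (a_pair n P pi S A lam Hs Hpi Hrev Hpos Hl0 Hl1 HSP m).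
Qed.
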